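(* Let $\mathsf{T}\ge2$ and $\mathsf{M}\ge1$ be integers, and let $\zeta_1(n),\zeta_2(n)$ be strictly positive sequences with $\lim_{n\to\infty}\zeta_1(n)/\zeta_2(n)=\lim_{n\to\infty}\zeta_2(n)=\lim_{n\to\infty}\zeta_2(n)^{\mathsf{T}/(\mathsf{T}-1)}/\zeta_1(n)=0$. For real $A_i,R_i,S_{i,t}$ ($i\in[\mathsf{M}]$, $t\in[\mathsf{T}-1]$) define $$p(x)=\prod_{i=1}^{\mathsf{M}}\Big((A_i+R_i)+\zeta_2(n)\sum_{t=1}^{\mathsf{T}-1}S_{i,t}x^t+\zeta_1(n)R_ix^{\mathsf{T}}\Big)=\sum_{k=0}^{\mathsf{M}\mathsf{T}}c_kx^k,$$ and for $\ell=0,\dots,\mathsf{M}-1$ let $C_\ell=\sum_{\mathcal{S}\subseteq[\mathsf{M}],|\mathcal{S}|=\ell}\big(\prod_{i\in\mathcal{S}}R_i\big)\big(\prod_{l\notin\mathcal{S}}(A_l+R_l)\big)$. Then for each $\ell=0,1,\dots,\mathsf{M}-1$, $$c_{\ell\mathsf{T}}=\zeta_1(n)^\ell C_\ell+o\big(\zeta_1(n)^\ell\big)\quad\text{as }n\to\infty,$$ with $A_i,R_i,S_{i,t}$ held fixed (not depending on $n$).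
   Context: $[\mathsf{M}]=\{1,\dots,\mathsf{M}\}$; empty products equal $1$. The coefficients $c_k$ depend on $n$ through $\zeta_1(n),\zeta_2(n)$. *)

(* Defs.v *)
From HB Require Import structures.
From mathcomp Require Import all_boot all_order all_algebra.
From mathcomp Require Import all_classical all_reals all_analysis.
Set Implicit Arguments. Unset Strict Implicit. Unset Printing Implicit Defensive.
Import Order.TTheory GRing.Theory Num.Theory.
Local Open Scope ring_scope.

Definition pprod (K : realType) (M T : nat) (A Rr : 'I_M -> K)
    (S : 'I_M -> nat -> K) (z1 z2 : K) : {poly K} :=
  \prod_(i < M) ((A i + Rr i)%:P
                 + z2 *: (\sum_(1 <= t < T) S i t *: 'X^t)
                 + (z1 * Rr i) *: 'X^T).

Definition Ccoef (K : realType) (M : nat) (A Rr : 'I_M -> K) (l : nat) : K :=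
  \sum_(U : {set 'I_M} | #|U| == l)
     (\prod_(i in U) Rr i) * (\prod_(j in ~: U) (A j + Rr j)).

(* Main.v *)
Set Warnings "-notation-overridden -ambiguous-paths -notation-incompatible-prefix".
Require Import Defs.
From HB Require Import structures.
From mathcomp Require Import all_boot all_order all_algebra.
From mathcomp Require Import all_classical all_reals all_analysis.
From mathcomp Require Import zify.
From Stdlib Require Import Lia.
Import Order.TTheory GRing.Theory Num.Theory.
Import numFieldNormedType.Exports.
Set Implicit Arguments. Unset Strict Implicit. Unset Printing Implicit Defensive.
Local Open Scope classical_set_scope.
Local Open Scope ring_scope.
Definition cf (K : realType) (M T : nat) (A Rr : 'I_M -> K) (S : 'I_M -> nat -> K)
  (z1 z2 : K) (i : 'I_M) (t : nat) : K :=
  if t == 0%N then A i + Rr i else if t == T then z1 * Rr i else z2 * S i t.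

Lemma factor_eq (K : realType) (M T : nat) (A Rr : 'I_M -> K) (S : 'I_M -> nat -> K)
  (z1 z2 : K) (i : 'I_M) : (0 < T)%N ->
  (A i + Rr i)%:P + z2 *: (\sum_(1 <= t < T) S i t *: 'X^t) + (z1 * Rr i) *: 'X^T
  = \sum_(t < T.+1) cf T A Rr S z1 z2 i t *: 'X^t.
Proof.
move=> T0; apply/polyP => k.
rewrite coef_sumMXn big_ord1_eq !coefD coefC !coefZ coef_sumMXn coefXn.
rewrite big_nat1_cond_eq /cf andbT.
case: (ltngtP k T) => hk.
- rewrite andbT mulr0 addr0 ltnS (ltnW hk).
  by case: k hk => [|k] hk /=; rewrite ?mulr0 ?addr0 ?add0r.
- rewrite andbF mulr0 addr0 mulr0 ltnS leqNgt hk /=.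
  by case: k hk => [|k] hk /=; rewrite ?add0r.
- subst k; rewrite andbF mulr0 addr0 mulr1 ltnSn.
  by rewrite (gtn_eqF T0) add0r.
Qed.

Lemma prod_scaleX (K : realType) (I : finType) (c : I -> K) (e : I -> nat) :
  \prod_i (c i *: 'X^(e i)) = (\prod_i c i) *: ('X^(\sum_i e i) : {poly K}).
Proof.
under eq_bigr do rewrite -mul_polyC.
by rewrite big_split /= -rmorph_prod prodrXr mul_polyC.
Qed.

Lemma pprod_coef (K : realType) (M T : nat) (A Rr : 'I_M -> K) (S : 'I_M -> nat -> K)
  (z1 z2 : K) (k : nat) : (0 < T)%N ->
  (pprod T A Rr S z1 z2)`_k =
  \sum_(d : {ffun 'I_M -> 'I_T.+1} | (\sum_i (d i : nat) == k)%N)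
     \prod_i cf T A Rr S z1 z2 i (d i).
Proof.
move=> T0; rewrite /pprod.
under eq_bigr do rewrite factor_eq //.
rewrite bigA_distr_bigA.
under eq_bigr do rewrite prod_scaleX.
by rewrite coef_sumMXn.
Qed.

Lemma good_part (K : realType) (M T : nat) (A Rr : 'I_M -> K) (S : 'I_M -> nat -> K)
  (z1 z2 : K) (l : nat) : (0 < T)%N ->
  \sum_(d : {ffun 'I_M -> 'I_T.+1} | (\sum_i (d i : nat) == l * T)%N &&
          [forall i, (d i == ord0) || (d i == ord_max)])
     \prod_i cf T A Rr S z1 z2 i (d i) = z1 ^+ l * Ccoef A Rr l.
Proof.
move=> T0.
have o0m : (ord0 == ord_max :> 'I_T.+1) = false.
  by apply/negbTE/eqP => /(congr1 val) /= /eqP; rewrite eq_sym (gtn_eqF T0).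
rewrite (reindex_onto (fun U : {set 'I_M} => [ffun i => if i \in U then ord_max else ord0])
   (fun d : {ffun 'I_M -> 'I_T.+1} => finset (fun i => d i == ord_max))) /=; last first.
  move=> d /andP[_ /forallP hd]; apply/ffunP => i; rewrite !ffunE inE.
  case: eqP => [->//|ne]; have := hd i; case/orP => /eqP hdi //.
rewrite /Ccoef big_distrr /=.
apply: eq_big => [U|U].
  have -> : finset (fun i => [ffun i => if i \in U then ord_max else (ord0 : 'I_T.+1)] i == ord_max) == U.
    apply/eqP/setP => i; rewrite inE ffunE; by case: (i \in U); rewrite ?eqxx ?o0m.
  rewrite andbT.
  have -> : [forall i, ([ffun i => if i \in U then ord_max else (ord0 : 'I_T.+1)] i == ord0)
      || ([ffun i => if i \in U then ord_max else (ord0 : 'I_T.+1)] i == ord_max)].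
    by apply/forallP => i; rewrite ffunE; case: (i \in U); rewrite eqxx ?orbT.
  rewrite andbT.
  under eq_bigr do rewrite ffunE fun_if.
  by rewrite -big_mkcond /= sum_nat_const eqn_pmul2r.
move=> /andP[/andP[hs _] _].
have {}hs : #|U| = l.
  move: hs; under eq_bigr do rewrite ffunE fun_if.
  by rewrite -big_mkcond /= sum_nat_const eqn_pmul2r // => /eqP.
rewrite (bigID (mem U)) /=.
have -> : \prod_(i | i \in U) cf T A Rr S z1 z2 i ([ffun i => if i \in U then ord_max else (ord0 : 'I_T.+1)] i)
   = z1 ^+ #|U| * \prod_(i in U) Rr i.
  rewrite -prodr_const -big_split /=; apply: eq_bigr => i iU.
  by rewrite ffunE iU /= /cf (gtn_eqF T0) eqxx.
have -> : \prod_(i | i \notin U) cf T A Rr S z1 z2 i ([ffun i => if i \in U then ord_max else (ord0 : 'I_T.+1)] i)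
   = \prod_(j in ~: U) (A j + Rr j).
  apply: eq_big => [j|j]; first by rewrite finset.in_setC.
  by move=> jU; rewrite ffunE (negbTE jU).
by rewrite hs mulrA.
Qed.

Definition gco (K : realType) (M T : nat) (A Rr : 'I_M -> K) (S : 'I_M -> nat -> K)
  (i : 'I_M) (t : nat) : K :=
  if t == 0%N then A i + Rr i else if t == T then Rr i else S i t.

Lemma cf_decomp (K : realType) (M T : nat) (A Rr : 'I_M -> K) (S : 'I_M -> nat -> K)
  (z1 z2 : K) (d : {ffun 'I_M -> 'I_T.+1}) : (0 < T)%N ->
  \prod_i cf T A Rr S z1 z2 i (d i) =
  (\prod_i gco T A Rr S i (d i)) * z1 ^+ (\sum_i ((d i : nat) == T))
     * z2 ^+ (\sum_i (0 < d i < T)%N).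
Proof.
move=> T0; rewrite -!prodrXr -!big_split /=; apply: eq_bigr => i _.
have := ltn_ord (d i); rewrite /cf /gco.
case: (d i : nat) => [|t] ht /=.
  by rewrite eq_sym (gtn_eqF T0) !mulr1.
case: eqP => [<-|ne]; first by rewrite ltnn /= expr1 expr0 mulr1 mulrC.
have -> : (t.+1 < T)%N by rewrite ltn_neqAle; apply/andP; split; [apply/eqP|rewrite -ltnS].
by rewrite /= expr1 expr0 mulr1 mulrC.
Qed.

Lemma split_nat (x T : nat) : (0 < T)%N -> (x <= T)%N ->
  x = ((x == T) * T + (if (0 < x < T)%N then x else 0))%N.
Proof.
move=> T0 xT; case: eqP => [->|ne]; first by rewrite ltnn andbF mul1n addn0.
have lt : (x < T)%N by rewrite ltn_neqAle xT andbT; apply/eqP.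
rewrite lt andbT mul0n add0n; by case: x {ne xT lt}.
Qed.

Lemma nat_facts (M T l : nat) (d : {ffun 'I_M -> 'I_T.+1}) : (0 < T)%N ->
  (\sum_i (d i : nat) == l * T)%N ->
  ~~ [forall i, (d i == ord0) || (d i == ord_max)] ->
  let k := (\sum_i ((d i : nat) == T))%N in
  let j := (\sum_i (0 < d i < T)%N)%N in
  (k < l)%N /\ ((l - k) * T <= j * T.-1)%N.
Proof.
move=> T0 /eqP hs /forallPn [i0]; rewrite negb_or => /andP[h0 hT] k j.
set m := (\sum_i (if (0 < d i < T)%N then (d i : nat) else 0))%N.
have split : (\sum_i (d i : nat) = k * T + m)%N.
  rewrite /k /m big_distrl /= -big_split /=; apply: eq_bigr => i _.
  by rewrite -split_nat // -ltnS.
have mle : (m <= j * T.-1)%N.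
  rewrite /m /j big_distrl /=; apply: leq_sum => i _.
  case: ifP => // /andP[_ lt]; rewrite mul1n; by rewrite -ltnS prednK // (leq_trans _ lt).
have mge : (1 <= m)%N.
  rewrite /m (bigD1 i0) //=.
  have mid : (0 < d i0 < T)%N.
    apply/andP; split.
      by rewrite lt0n; apply: contra h0 => /eqP e; apply/eqP/val_inj.
    have := ltn_ord (d i0); rewrite ltnS leq_eqVlt => /orP[/eqP e|//].
    by move: hT; rewrite (_ : d i0 = ord_max) ?eqxx //; apply/val_inj.
  rewrite mid; case/andP: mid => p _; exact: leq_trans p (leq_addr _ _).
rewrite hs in split.
have klt : (k < l)%N.
  rewrite ltnNge; apply/negP => kl.
  have : (l * T <= k * T)%N by rewrite leq_mul2r kl orbT.
  rewrite split; lia.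
split => //.
rewrite mulnBl split addKn //.
Qed.
Lemma ratio0 (K : realType) (T : nat) (hT : (2 <= T)%N)
    (z1 z2 : nat -> K) (hz1 : forall n, 0 < z1 n) (hz2 : forall n, 0 < z2 n)
    (lim2 : z2 @ \oo --> 0%R)
    (lim3 : (fun n => powR (z2 n) (T%:R / (T.-1)%:R) / z1 n) @ \oo --> 0%R)
    (p j : nat) : (0 < p)%N -> (p * T <= j * T.-1)%N ->
  (fun n => z2 n ^+ j / z1 n ^+ p) @ \oo --> 0%R.
Proof.
move=> p0 hpj.
apply: (@squeeze_cvgr _ _ eventually_filter _ (cst 0) (fun n => powR (z2 n) (T%:R / (T.-1)%:R) / z1 n)); last 2 first.
- exact: cvg_cst.
- exact: lim3.
have e1 := cvgr_lt _ lim2 1 ltr01.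
have e2 := cvgr_lt _ lim3 1 ltr01.
near=> n.
have z2le1 : z2 n <= 1 by apply: ltW; near: n; exact: e1.
have wle1 : powR (z2 n) (T%:R / (T.-1)%:R) / z1 n <= 1 by apply: ltW; near: n; exact: e2.
have h1 := hz1 n; have h2 := hz2 n.
apply/andP; split.
  by apply: divr_ge0; apply: exprn_ge0; apply: ltW.
set w := powR (z2 n) (T%:R / (T.-1)%:R).
have Tm1 : (0 < T.-1)%N by rewrite -subn1 subn_gt0.
have -> : z2 n ^+ j = powR (z2 n) j%:R by rewrite powR_mulrn // ltW.
apply: (@le_trans _ _ ((w / z1 n) ^+ p)); last first.
  by apply: ler_iXnr => //; apply: divr_ge0; [exact: powR_ge0| exact: ltW].
rewrite expr_div_n ler_pM2r; last by rewrite invr_gt0 exprn_gt0.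
rewrite /w -powR_mulrn ?powR_ge0 // -powRrM.
apply: ger_powR; first by rewrite h2.
rewrite mulrAC ler_pdivrMr ?ltr0n // -!natrM ler_nat mulnC.
done.
Unshelve. all: by end_near.
Qed.

Unset Implicit Arguments.

Theorem lemma8 (K : realType) (T M : nat) (hT : (2 <= T)%N) (hM : (1 <= M)%N)
    (z1 z2 : nat -> K) (hz1 : forall n, 0 < z1 n) (hz2 : forall n, 0 < z2 n)
    (lim1 : (fun n => z1 n / z2 n) @ \oo --> 0%R)
    (lim2 : z2 @ \oo --> 0%R)
    (lim3 : (fun n => powR (z2 n) (T%:R / (T.-1)%:R) / z1 n) @ \oo --> 0%R)
    (A Rr : 'I_M -> K) (S : 'I_M -> nat -> K) (l : nat) (hl : (l < M)%N) :
  (fun n => ((pprod T A Rr S (z1 n) (z2 n))`_(l * T) - z1 n ^+ l * Ccoef A Rr l)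
            / z1 n ^+ l) @ \oo --> 0%R.
Proof.
have T0 : (0 < T)%N by apply: ltnW.
have eqf : (fun n => ((pprod T A Rr S (z1 n) (z2 n))`_(l * T) - z1 n ^+ l * Ccoef A Rr l)
            / z1 n ^+ l) =
  (fun n => \sum_(d : {ffun 'I_M -> 'I_T.+1} | (\sum_i (d i : nat) == l * T)%N &&
          ~~ [forall i, (d i == ord0) || (d i == ord_max)])
     (\prod_i cf T A Rr S (z1 n) (z2 n) i (d i) / z1 n ^+ l)).
  apply: funext => n.
  by rewrite pprod_coef // (bigID (fun d : {ffun 'I_M -> 'I_T.+1} => [forall i, (d i == ord0) || (d i == ord_max)])) /= good_part // addrC addrK mulr_suml.
rewrite eqf.
suff : (fun n => \sum_(d : {ffun 'I_M -> 'I_T.+1} | (\sum_i (d i : nat) == l * T)%N &&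
          ~~ [forall i, (d i == ord0) || (d i == ord_max)])
     (\prod_i cf T A Rr S (z1 n) (z2 n) i (d i) / z1 n ^+ l)) @ \oo -->
   \sum_(d : {ffun 'I_M -> 'I_T.+1} | (\sum_i (d i : nat) == l * T)%N &&
          ~~ [forall i, (d i == ord0) || (d i == ord_max)]) (0 : K).
  by rewrite big1.
apply: cvg_big; first exact: add_continuous.
move=> d /andP[Pd nQ].
have [klt hle] := nat_facts T0 Pd nQ.
set k := (\sum_i ((d i : nat) == T))%N in klt hle.
set j := (\sum_i (0 < d i < T)%N)%N in hle.
have eqg : (fun n => \prod_i cf T A Rr S (z1 n) (z2 n) i (d i) / z1 n ^+ l) =
   (fun n => (\prod_i gco T A Rr S i (d i)) * (z2 n ^+ j / z1 n ^+ (l - k))).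
  apply: funext => n; rewrite cf_decomp // -/k -/j.
  have -> : z1 n ^+ l = z1 n ^+ k * z1 n ^+ (l - k) by rewrite -exprD subnKC // ltnW.
  have z1k : z1 n ^+ k != 0 by rewrite expf_neq0 // gt_eqF.
  rewrite invfM -!mulrA; congr (_ * _).
  by rewrite mulrCA; congr (_ * _); rewrite mulrA mulfV // mul1r.
rewrite eqg -(mulr0 (\prod_i gco T A Rr S i (d i))).
apply: cvgMl_tmp.
apply: (ratio0 hT hz1 hz2 lim2 lim3).
  by rewrite subn_gt0.
exact: hle.
Qed.
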